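(* Let $V$ be a finite-dimensional vector space over a field $\mathbb{F}$ with fixed basis $e_1,\dots,e_n$, and let $N(t)$ be a nonsingular $\mathbb{F}(t)$-linear map $V(t)\to V(t)$. If $L$ and $L'$ are subspaces of $\bigwedge V$ such that $x\wedge x'=0$ for all $x\in L$, $x'\in L'$, then also $y\wedge y'=0$ for all $y\in NL$, $y'\in NL'$.
   Context: $\mathbb{F}(t)$ is the field of rational functions in a transcendental $t$; $V(t)=V\otimes_{\mathbb{F}}\mathbb{F}(t)$, and $N(t)$ extends to $\bigwedge V(t)$ by $u_1\wedge\cdots\wedge u_r\mapsto N(t)u_1\wedge\cdots\wedge N(t)u_r$ and linearity. $\bigwedge V$ is given the basis of monomials $e_{s_1}\wedge\cdots\wedge e_{s_r}$, $s_1<\cdots<s_r$. Limit action: for nonzero $x\in\bigwedge V$, write $N(t)x$ in the monomial basis, multiply by a nonzero element of $\mathbb{F}(t)$ so that all coefficients are polynomials in $t$ with no common divisor of positive $t$-degree, and evaluate at $t=0$; the result is a nonzero element $Nx$ of $\bigwedge V$, well defined up to nonzero scalar. For a subspace $L$, $NL$ is the subspace spanned by $\{Nx:x\in L\setminus\{0\}\}$ (equivalently, the limit of $L$ as a point of the appropriate Grassmannian); it has the same dimension as $L$. *)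

(* Defs.v *)
From HB Require Import structures.
From mathcomp Require Import all_boot all_order all_algebra fraction.
Set Implicit Arguments. Unset Strict Implicit. Unset Printing Implicit Defensive.
Import Order.TTheory GRing.Theory Num.Theory.
Local Open Scope ring_scope.

(* V = R^n with basis e_0, ..., e_{n-1}; the exterior algebra /\ V is
   represented in its monomial basis: e_S (S a subset of 'I_n) is the
   wedge e_{s_1} /\ ... /\ e_{s_r} with s_1 < ... < s_r. *)
Definition lam (R : Type) (n : nat) := {ffun {set 'I_n} -> R}.

Definition inv_count n (S T : {set 'I_n}) : nat :=
  #|[set p : 'I_n * 'I_n | [&& p.1 \in S, p.2 \in T & (p.2 < p.1)%N]]|.

Definition wedge (R : pzRingType) n (x y : lam R n) : lam R n :=
  [ffun U => \sum_(S : {set 'I_n}) \sum_(T : {set 'I_n} | (S :&: T == set0) && (S :|: T == U))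
      (-1) ^+ inv_count S T * x S * y T].

Definition lam_one (R : pzRingType) n : lam R n := [ffun S => (S == set0)%:R].

Definition embed (R : pzRingType) n (v : 'I_n -> R) : lam R n :=
  [ffun S => \sum_(i : 'I_n | S == [set i]) v i].

Notation ratfun F := {fraction {poly F}}.
Notation topoly F p := (@FracField.tofrac {poly F} p).

(* action of a linear map N on /\ V(t): the monomial e_S is sent to
   N e_{s_1} /\ ... /\ N e_{s_r}, extended linearly;  N e_j = sum_i N i j e_i *)
Definition extN (K : pzRingType) n (N : 'M[K]_n) (x : lam K n) : lam K n :=
  [ffun U => \sum_(S : {set 'I_n})
     x S * (foldr (@wedge K n) (lam_one K n)
                 [seq embed (fun i => N i j) | j <- enum S]) U].

(* z is (a representative of) the limit N x: write N(t) x in the monomial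
   basis, multiply by a nonzero c in F(t) so that the coefficients are
   polynomials p_S with no common divisor of positive degree, and evaluate
   at t = 0. *)
Definition limit_of (F : fieldType) n (N : 'M[ratfun F]_n) (x z : lam F n) : Prop :=
  let y := extN N [ffun S => topoly F (x S)%:P] in
  exists c : ratfun F, c != 0 /\
    exists p : {ffun {set 'I_n} -> {poly F}},
      (forall S, c * y S = topoly F (p S)) /\
      (forall d : {poly F}, (forall S, d %| p S) -> (size d <= 1)%N) /\
      z = [ffun S => (p S).[0]].

Definition is_subspace (F : fieldType) n (L : lam F n -> Prop) : Prop :=
  L 0 /\ forall (a : F) (x y : lam F n), L x -> L y -> L ([ffun S => a * x S] + y).

Definition in_span (F : fieldType) n (P : lam F n -> Prop) (y : lam F n) : Prop :=
  exists s : seq (F * lam F n), (forall q, q \in s -> P q.2) /\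
    y = \sum_(q <- s) [ffun S => q.1 * q.2 S].

Definition lim_gens (F : fieldType) n (N : 'M[ratfun F]_n) (L : lam F n -> Prop)
  (z : lam F n) : Prop :=
  exists x, [/\ L x, x != 0 & limit_of N x z].

Definition lim_space (F : fieldType) n (N : 'M[ratfun F]_n) (L : lam F n -> Prop) :
  lam F n -> Prop := in_span (lim_gens N L).

(* Main.v *)
Require Import Defs.
From HB Require Import structures.
From mathcomp Require Import all_boot all_order all_algebra fraction.
From mathcomp Require Import ring.
Set Implicit Arguments. Unset Strict Implicit. Unset Printing Implicit Defensive.
Import Order.TTheory GRing.Theory Num.Theory.
Local Open Scope ring_scope.

Section Ext.
Variables (K : comNzRingType) (n : nat).
Implicit Types (S T U W A B C : {set 'I_n}) (x y z : lam K n).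

Definition scl (a : K) x : lam K n := [ffun S => a * x S].

Definition sgnw S T : K := if S :&: T == set0 then (-1) ^+ inv_count S T else 0.

Lemma wedge_coef x y U :
  wedge x y U = \sum_S \sum_T sgnw S T * x S * y T * (S :|: T == U)%:R.
Proof.
rewrite ffunE; apply: eq_bigr => S _; rewrite big_mkcond /=; apply: eq_bigr => T _.
rewrite /sgnw; case: (S :&: T == set0); case: (S :|: T == U) => /=;
  by rewrite ?mulr1 ?mulr0 ?mul0r.
Qed.

Lemma sum_delta (F : {set 'I_n} -> K) g : \sum_A F A * (A == g)%:R = F g.
Proof.
rewrite (bigD1 g) //= eqxx mulr1 big1 ?addr0 // => A /negbTE ->; by rewrite mulr0.
Qed.

Lemma invE S T : inv_count S T =
  (\sum_(p : 'I_n * 'I_n) [&& p.1 \in S, p.2 \in T & (p.2 < p.1)%N])%N.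
Proof. by rewrite /inv_count -sum1dep_card big_mkcond /=. Qed.

Lemma inv_Ul A B C : A :&: B = set0 ->
  inv_count (A :|: B) C = (inv_count A C + inv_count B C)%N.
Proof.
move=> dAB; rewrite !invE -big_split; apply: eq_bigr => p _ /=.
have : p.1 \notin A :&: B by rewrite dAB in_set0.
rewrite in_setI in_setU; case: (p.1 \in A); case: (p.1 \in B); case: (p.2 \in C); by case: (p.2 < p.1)%N.
Qed.

Lemma inv_Ur A B C : B :&: C = set0 ->
  inv_count A (B :|: C) = (inv_count A B + inv_count A C)%N.
Proof.
move=> dBC; rewrite !invE -big_split; apply: eq_bigr => p _ /=.
have : p.2 \notin B :&: C by rewrite dBC in_set0.
rewrite in_setI in_setU; case: (p.1 \in A); case: (p.2 \in B); case: (p.2 \in C); by case: (p.2 < p.1)%N.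
Qed.

Lemma sgnw_Ul A B C : A :&: B = set0 -> sgnw (A :|: B) C = sgnw A C * sgnw B C.
Proof.
move=> dAB; rewrite /sgnw setIUl setU_eq0.
case: (A :&: C == set0); case: (B :&: C == set0); rewrite /= ?mulr0 ?mul0r //.
by rewrite inv_Ul // exprD.
Qed.

Lemma sgnw_Ur A B C : B :&: C = set0 -> sgnw A (B :|: C) = sgnw A B * sgnw A C.
Proof.
move=> dBC; rewrite /sgnw setIUr setU_eq0.
case: (A :&: B == set0); case: (A :&: C == set0); rewrite /= ?mulr0 ?mul0r //.
by rewrite inv_Ur // exprD.
Qed.

Lemma sgnw_assoc A B C :
  sgnw A B * sgnw (A :|: B) C = sgnw B C * sgnw A (B :|: C).
Proof.
case eAB: (A :&: B == set0); last first.
  by rewrite [sgnw A B]/sgnw eAB mul0r [sgnw A (B :|: C)]/sgnw setIUr setU_eq0 eAB /= mulr0.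
case eBC: (B :&: C == set0); last first.
  by rewrite [sgnw B C]/sgnw eBC mul0r [sgnw (A :|: B) C]/sgnw setIUl setU_eq0 eBC andbF /= mulr0.
rewrite sgnw_Ul; last exact/eqP. rewrite sgnw_Ur; last exact/eqP. ring.
Qed.

Lemma sgnw0l T : sgnw set0 T = 1.
Proof.
rewrite /sgnw set0I eqxx invE big1 // => p _; by rewrite in_set0.
Qed.

Lemma sgnw0r T : sgnw T set0 = 1.
Proof.
rewrite /sgnw setI0 eqxx invE big1 // => p _; by rewrite in_set0 andbF.
Qed.

Lemma inv11 (i j : 'I_n) : inv_count [set i] [set j] = (j < i)%N.
Proof.
rewrite invE (bigD1 (i, j)) //= !in_set1 !eqxx /= big1 ?addn0 // => -[a b] /=.
rewrite !in_set1 xpair_eqE; by case: eqP; case: eqP.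
Qed.

Lemma sgnw11 (i j : 'I_n) :
  sgnw [set i] [set j] = if i == j then 0 else if (j < i)%N then -1 else 1.
Proof.
rewrite /sgnw inv11; case: (eqVneq i j) => [->|ne].
  rewrite setIid; case: ifP => // /eqP /setP /(_ j); by rewrite !inE eqxx.
have -> : [set i] :&: [set j] == set0.
  apply/eqP/setP => k; rewrite !inE; case: (eqVneq k i) => // ->; by rewrite (negbTE ne).
by case: (j < i)%N; rewrite ?expr1 ?expr0.
Qed.

Lemma sgnw11_anti (i j : 'I_n) : sgnw [set j] [set i] = - sgnw [set i] [set j].
Proof.
rewrite !sgnw11 eq_sym; case: (eqVneq i j) => [_|ne]; first by rewrite oppr0.
case: ltngtP => h; rewrite ?opprK //.
by move: ne; rewrite -val_eqE /= h eqxx.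
Qed.

Lemma sgnw1_min (i : 'I_n) A : (forall a, a \in A -> (i < a)%N) -> sgnw [set i] A = 1.
Proof.
move=> h; rewrite /sgnw.
have -> : [set i] :&: A == set0.
  apply/eqP/setP => k; rewrite !inE; case: eqP => // -> /=.
  by apply/negP => /h; rewrite ltnn.
rewrite invE big1 // => -[a b] _ /=; rewrite in_set1.
case: eqP => //= ->; case bA: (b \in A) => //=; by rewrite ltnNge ltnW // h.
Qed.


Lemma lamD x y S : (x + y) S = x S + y S. Proof. by rewrite ffunE. Qed.
Lemma lamN x S : (- x) S = - x S. Proof. by rewrite ffunE. Qed.
Lemma lam0 S : (0 : lam K n) S = 0. Proof. by rewrite ffunE. Qed.
Lemma sclE a x S : scl a x S = a * x S. Proof. by rewrite ffunE. Qed.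

Lemma wedgeDl x x' y : wedge (x + x') y = wedge x y + wedge x' y.
Proof.
apply/ffunP => U; rewrite lamD !wedge_coef -big_split; apply: eq_bigr => S _.
rewrite -big_split; apply: eq_bigr => T _ /=; rewrite lamD; ring.
Qed.

Lemma wedgeDr x y y' : wedge x (y + y') = wedge x y + wedge x y'.
Proof.
apply/ffunP => U; rewrite lamD !wedge_coef -big_split; apply: eq_bigr => S _.
rewrite -big_split; apply: eq_bigr => T _ /=; rewrite lamD; ring.
Qed.

Lemma wedge0l y : wedge 0 y = 0.
Proof.
apply/ffunP => U; rewrite lam0 wedge_coef big1 // => S _; rewrite big1 // => T _.
by rewrite lam0 mulr0 !mul0r.
Qed.

Lemma wedge0r x : wedge x 0 = 0.
Proof.
apply/ffunP => U; rewrite lam0 wedge_coef big1 // => S _; rewrite big1 // => T _.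
by rewrite lam0 mulr0 !mul0r.
Qed.

Lemma wedgeZl a x y : wedge (scl a x) y = scl a (wedge x y).
Proof.
apply/ffunP => U; rewrite sclE !wedge_coef mulr_sumr; apply: eq_bigr => S _.
rewrite mulr_sumr; apply: eq_bigr => T _ /=; rewrite sclE; ring.
Qed.

Lemma wedgeZr a x y : wedge x (scl a y) = scl a (wedge x y).
Proof.
apply/ffunP => U; rewrite sclE !wedge_coef mulr_sumr; apply: eq_bigr => S _.
rewrite mulr_sumr; apply: eq_bigr => T _ /=; rewrite sclE; ring.
Qed.

Lemma wedgeNl x y : wedge (- x) y = - wedge x y.
Proof.
apply/ffunP => U; rewrite lamN !wedge_coef -sumrN; apply: eq_bigr => S _.
rewrite -sumrN; apply: eq_bigr => T _ /=; rewrite lamN; ring.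
Qed.

Lemma wedge_suml (I : Type) (r : seq I) (P : pred I) (F : I -> lam K n) y :
  wedge (\sum_(i <- r | P i) F i) y = \sum_(i <- r | P i) wedge (F i) y.
Proof. exact: (big_morph (fun x => wedge x y) (fun a b => wedgeDl a b y) (wedge0l y)). Qed.

Lemma wedge_sumr (I : Type) (r : seq I) (P : pred I) (F : I -> lam K n) x :
  wedge x (\sum_(i <- r | P i) F i) = \sum_(i <- r | P i) wedge x (F i).
Proof. exact: (big_morph (fun y => wedge x y) (fun a b => wedgeDr x a b) (wedge0r x)). Qed.

Lemma scl1 x : scl 1 x = x. Proof. apply/ffunP => S; by rewrite sclE mul1r. Qed.
Lemma scl0 x : scl 0 x = 0. Proof. apply/ffunP => S; by rewrite sclE mul0r lam0. Qed.
Lemma sclA a b x : scl a (scl b x) = scl (a * b) x.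
Proof. apply/ffunP => S; by rewrite !sclE mulrA. Qed.
Lemma sclN a x : - scl a x = scl (- a) x.
Proof. apply/ffunP => S; by rewrite lamN !sclE mulNr. Qed.

Lemma wedge1l x : wedge (lam_one K n) x = x.
Proof.
apply/ffunP => U; rewrite wedge_coef (bigD1 set0) //= [X in _ + X]big1 ?addr0.
  rewrite (eq_bigr (fun T => x T * (T == U)%:R)) ?sum_delta // => T _.
  by rewrite sgnw0l ffunE eqxx set0U /= mulr1n !mul1r.
move=> S /negbTE nS; apply: big1 => T _; by rewrite ffunE nS mulr0 !mul0r.
Qed.


Lemma sum_delta' (F : {set 'I_n} -> K) g : \sum_A F A * (g == A)%:R = F g.
Proof. under eq_bigr do rewrite eq_sym. exact: sum_delta. Qed.

Lemma coef3l x y z U : wedge (wedge x y) z U =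
  \sum_S \sum_T \sum_W sgnw S T * sgnw (S :|: T) W * x S * y T * z W
       * (S :|: T :|: W == U)%:R.
Proof.
rewrite wedge_coef.
transitivity (\sum_A \sum_W \sum_S \sum_T (sgnw S T * x S * y T *
   (sgnw A W * z W * (A :|: W == U)%:R)) * (S :|: T == A)%:R).
  apply: eq_bigr => A _; apply: eq_bigr => W _.
  rewrite wedge_coef mulr_sumr mulr_suml mulr_suml; apply: eq_bigr => S _.
  rewrite mulr_sumr mulr_suml mulr_suml; apply: eq_bigr => T _; ring.
transitivity (\sum_S \sum_T \sum_W \sum_A (sgnw S T * x S * y T *
   (sgnw A W * z W * (A :|: W == U)%:R)) * (S :|: T == A)%:R); last first.
  apply: eq_bigr => S _; apply: eq_bigr => T _; apply: eq_bigr => W _.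
  rewrite sum_delta'; ring.
under eq_bigr => A _ do rewrite exchange_big.
under eq_bigr => A _ do under eq_bigr => S _ do rewrite exchange_big.
rewrite exchange_big.
under eq_bigr => S _ do rewrite exchange_big.
by under eq_bigr => S _ do under eq_bigr => T _ do rewrite exchange_big.
Qed.

Lemma coef3r x y z U : wedge x (wedge y z) U =
  \sum_S \sum_T \sum_W sgnw T W * sgnw S (T :|: W) * x S * y T * z W
       * (S :|: (T :|: W) == U)%:R.
Proof.
rewrite wedge_coef.
transitivity (\sum_S \sum_B \sum_T \sum_W (sgnw T W * y T * z W *
   (sgnw S B * x S * (S :|: B == U)%:R)) * (T :|: W == B)%:R).
  apply: eq_bigr => S _; apply: eq_bigr => B _.
  rewrite wedge_coef mulr_sumr mulr_suml; apply: eq_bigr => T _.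
  rewrite mulr_sumr mulr_suml; apply: eq_bigr => W _; ring.
transitivity (\sum_S \sum_T \sum_W \sum_B (sgnw T W * y T * z W *
   (sgnw S B * x S * (S :|: B == U)%:R)) * (T :|: W == B)%:R); last first.
  apply: eq_bigr => S _; apply: eq_bigr => T _; apply: eq_bigr => W _.
  rewrite sum_delta'; ring.
under eq_bigr => S _ do rewrite exchange_big.
by under eq_bigr => S _ do under eq_bigr => T _ do rewrite exchange_big.
Qed.

Lemma wedgeA x y z : wedge (wedge x y) z = wedge x (wedge y z).
Proof.
apply/ffunP => U; rewrite coef3l coef3r; apply: eq_bigr => S _.
apply: eq_bigr => T _; apply: eq_bigr => W _.
by rewrite sgnw_assoc setUA.
Qed.

Lemma embedE (u : 'I_n -> K) S : embed u S = \sum_i u i * (S == [set i])%:R.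
Proof.
rewrite ffunE big_mkcond /=; apply: eq_bigr => i _.
by case: (S == [set i]); rewrite ?mulr1 ?mulr0.
Qed.

Lemma prod_sums a (f g : 'I_n -> K) b :
  a * (\sum_i f i) * (\sum_j g j) * b = \sum_i \sum_j a * f i * g j * b.
Proof.
rewrite -(mulrA a) big_distrlr /= mulr_sumr mulr_suml; apply: eq_bigr => i _.
rewrite mulr_sumr mulr_suml; apply: eq_bigr => j _; ring.
Qed.

Lemma wedge_embed (u v : 'I_n -> K) U : wedge (embed u) (embed v) U =
  \sum_i \sum_j u i * v j * sgnw [set i] [set j] * ([set i] :|: [set j] == U)%:R.
Proof.
rewrite wedge_coef.
transitivity (\sum_S \sum_T \sum_i \sum_j ((u i * v j * sgnw S T *
   (S :|: T == U)%:R) * (S == [set i])%:R) * (T == [set j])%:R).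
  apply: eq_bigr => S _; apply: eq_bigr => T _.
  rewrite !embedE prod_sums; apply: eq_bigr => i _; apply: eq_bigr => j _; ring.
transitivity (\sum_i \sum_j \sum_S \sum_T ((u i * v j * sgnw S T *
   (S :|: T == U)%:R) * (S == [set i])%:R) * (T == [set j])%:R); last first.
  apply: eq_bigr => i _; apply: eq_bigr => j _.
  under eq_bigr => S _ do rewrite sum_delta.
  by rewrite sum_delta.
under eq_bigr => S _ do rewrite exchange_big.
under eq_bigr => S _ do under eq_bigr => i _ do rewrite exchange_big.
rewrite exchange_big.
by under eq_bigr => i _ do rewrite exchange_big.
Qed.

Lemma antisym_sum (f : 'I_n -> 'I_n -> K) :
  (forall i j, f j i = - f i j) -> (forall i, f i i = 0) ->
  \sum_i \sum_j f i j = 0.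
Proof.
move=> fa f0.
pose g i j := if (val i < val j)%N then f i j else 0.
have fg i j : f i j = g i j - g j i.
  rewrite /g; case: ltngtP => h.
  - by rewrite subr0.
  - by rewrite fa; ring.
  - by rewrite (val_inj h) f0 subrr.
under eq_bigr => i _ do under eq_bigr => j _ do rewrite fg.
under eq_bigr => i _ do rewrite sumrB.
by rewrite sumrB [X in _ - X]exchange_big subrr.
Qed.

Lemma wedge_embed_anti (u v : 'I_n -> K) :
  wedge (embed u) (embed v) = - wedge (embed v) (embed u).
Proof.
apply/ffunP => U; rewrite lamN !wedge_embed exchange_big -sumrN.
apply: eq_bigr => i _; rewrite -sumrN; apply: eq_bigr => j _.
rewrite sgnw11_anti setUC; ring.
Qed.

Lemma wedge_embed_sq (u : 'I_n -> K) : wedge (embed u) (embed u) = 0.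
Proof.
apply/ffunP => U; rewrite lam0 wedge_embed; apply: antisym_sum.
  move=> i j; rewrite sgnw11_anti setUC; ring.
by move=> i; rewrite sgnw11 eqxx; ring.
Qed.

End Ext.

Section PP.
Variables (K : comNzRingType) (n : nat) (N : 'M[K]_n).
Implicit Types (S T U W A B C : {set 'I_n}) (x y z : lam K n).

Definition wv (j : 'I_n) : lam K n := embed (fun i => N i j).
Definition P S : lam K n := foldr (@wedge K n) (lam_one K n) [seq wv j | j <- enum S].

Lemma wv_anti i j : wedge (wv i) (wv j) = - wedge (wv j) (wv i).
Proof. exact: wedge_embed_anti. Qed.
Lemma wv_sq i : wedge (wv i) (wv i) = 0.
Proof. exact: wedge_embed_sq. Qed.

Lemma enum_sorted S : sorted (fun a b : 'I_n => (a < b)%N) (enum S).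
Proof.
rewrite -deprecated_filter_index_enum.
apply: sorted_filter; first by move=> a b c; apply: ltn_trans.
have e : index_enum 'I_n = enum 'I_n.
  by rewrite -[LHS]filter_predT deprecated_filter_index_enum.
have := iota_ltn_sorted 0 n; by rewrite -val_enum_ord sorted_map e.
Qed.

Lemma enum_min S s : s \in S -> (forall t, t \in S -> (s <= t)%N) ->
  enum S = s :: enum (S :\ s).
Proof.
move=> sS smin.
apply: (irr_sorted_eq (leT := fun a b : 'I_n => (a < b)%N)).
- by move=> a b c; apply: ltn_trans.
- by move=> a; rewrite /= ltnn.
- exact: enum_sorted.
- rewrite /= path_sortedE; last by move=> a b c; apply: ltn_trans.
  rewrite enum_sorted andbT; apply/allP => t; rewrite mem_enum in_setD1.
  case/andP => ts tS; rewrite ltn_neqAle smin // andbT.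
  by apply: contra ts => /eqP h; apply/eqP; apply: val_inj.
- move=> t; rewrite inE !mem_enum in_setD1.
  by case: (eqVneq t s) => [->|] //=.
Qed.

Lemma P_cons S s : s \in S -> (forall t, t \in S -> (s <= t)%N) ->
  P S = wedge (wv s) (P (S :\ s)).
Proof. move=> sS smin; by rewrite /P (enum_min sS smin). Qed.

Lemma P0 : P set0 = lam_one K n.
Proof. by rewrite /P enum_set0. Qed.

Lemma wedge_wP_k k : forall A i, #|A| = k ->
  wedge (wv i) (P A) = scl (sgnw K [set i] A) (P (i |: A)).
Proof.
elim: k => [|k IH] A i cA.
  have -> : A = set0 by apply/eqP; rewrite -cards_eq0 cA.
  by rewrite setU0 sgnw0r scl1 P0 /P enum_set1.
have [a0 a0A] : exists a0, a0 \in A by apply/set0Pn; rewrite -card_gt0 cA.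
case: (arg_minnP (fun j : 'I_n => val j) a0A) => a aA amin.
have {}aA : a \in A by [].
have {}amin : forall t, t \in A -> (a <= t)%N by move=> t tA; apply: amin.
have cA' : #|A :\ a| = k by move: cA; rewrite (cardsD1 a) aA add1n => -[].
have PA : P A = wedge (wv a) (P (A :\ a)) by apply: P_cons.
case: (ltngtP (val i) (val a)) => h.
- have iA t : t \in A -> (i < t)%N by move=> tA; apply: (leq_trans h (amin t tA)).
  have niA : i \notin A by apply/negP => /iA; rewrite ltnn.
  rewrite sgnw1_min // scl1 (P_cons (setU11 i A)) ?setU1K //.
  by move=> t; rewrite in_setU1; case/orP => [/eqP->|/iA/ltnW].
- have sA : sgnw K [set i] A = - sgnw K [set i] (A :\ a).
    rewrite -{1}(setD1K aA) sgnw_Ur; last first.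
      apply/setP => t; rewrite !inE; by case: (eqVneq t a) => [->|]; rewrite ?eqxx.
    rewrite sgnw11 h; case: (eqVneq i a) => [ia|_]; last by rewrite mulN1r.
    by rewrite ia ltnn in h.
  have PiA : P (i |: A) = wedge (wv a) (P (i |: (A :\ a))).
    rewrite (P_cons (s := a)); last first.
    + by move=> t; rewrite in_setU1; case/orP => [/eqP->|/amin //]; apply: ltnW.
    + by rewrite in_setU1 aA orbT.
    congr (wedge _ (P _)); apply/setP => t; rewrite !inE.
    case: (eqVneq t i) => [->|] //=; rewrite andbT.
    by apply/negP => /eqP ia; rewrite ia ltnn in h.
  rewrite PA -wedgeA wv_anti wedgeNl wedgeA IH // wedgeZr -PiA sA.
  by rewrite sclN.
- have ia : i = a by apply: val_inj.
  rewrite PA ia -wedgeA wv_sq wedge0l.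
  have -> : sgnw K [set a] A = 0.
    rewrite /sgnw; case: ifP => // /eqP /setP /(_ a); by rewrite !inE eqxx aA.
  by rewrite scl0.
Qed.

Lemma wedge_wP A i : wedge (wv i) (P A) = scl (sgnw K [set i] A) (P (i |: A)).
Proof. by apply: (wedge_wP_k (k := #|A|)). Qed.

Lemma wedgePP_k k : forall S T, #|S| = k ->
  wedge (P S) (P T) = scl (sgnw K S T) (P (S :|: T)).
Proof.
elim: k => [|k IH] S T cS.
  have -> : S = set0 by apply/eqP; rewrite -cards_eq0 cS.
  by rewrite P0 wedge1l sgnw0l scl1 set0U.
have [a0 a0S] : exists a0, a0 \in S by apply/set0Pn; rewrite -card_gt0 cS.
case: (arg_minnP (fun j : 'I_n => val j) a0S) => s sS smin.
have {}sS : s \in S by [].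
have {}smin : forall t, t \in S -> (s <= t)%N by move=> t tS; apply: smin.
have cS' : #|S :\ s| = k by move: cS; rewrite (cardsD1 s) sS add1n => -[].
rewrite (P_cons sS smin) wedgeA IH // wedgeZr wedge_wP sclA.
have -> : s |: (S :\ s :|: T) = S :|: T by rewrite setUA setD1K.
have := sgnw_assoc K [set s] (S :\ s) T.
rewrite sgnw1_min ?mul1r ?setD1K // => [-> //|t].
rewrite in_setD1 => /andP [ts tS]; rewrite ltn_neqAle smin // andbT.
by apply: contra ts => /eqP h; apply/eqP; apply: val_inj.
Qed.

Lemma wedgePP S T : wedge (P S) (P T) = scl (sgnw K S T) (P (S :|: T)).
Proof. by apply: (wedgePP_k (k := #|S|)). Qed.

End PP.

Section Fin.
Variables (K : comNzRingType) (n : nat).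
Implicit Types (S T U W A B C : {set 'I_n}) (x y z : lam K n).

Lemma extN_sum (N : 'M[K]_n) x : extN N x = \sum_S scl (x S) (P N S).
Proof.
apply/ffunP => U; rewrite ffunE sum_ffunE; apply: eq_bigr => S _; by rewrite sclE.
Qed.

Lemma extN_wedge (N : 'M[K]_n) x y :
  wedge (extN N x) (extN N y) = extN N (wedge x y).
Proof.
rewrite !extN_sum wedge_suml.
under eq_bigr => S _ do rewrite wedge_sumr.
under eq_bigr => S _ do under eq_bigr => T _ do
  rewrite wedgeZl wedgeZr wedgePP sclA sclA.
apply/ffunP => V; rewrite !sum_ffunE.
under eq_bigr => S _ do rewrite sum_ffunE.
transitivity (\sum_S \sum_T \sum_U (x S * y T * sgnw K S T * P N U V)
   * (S :|: T == U)%:R).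
  apply: eq_bigr => S _; apply: eq_bigr => T _; rewrite sclE sum_delta'; ring.
under eq_bigr => S _ do rewrite exchange_big.
rewrite exchange_big; apply: eq_bigr => U _.
rewrite sclE wedge_coef mulr_suml; apply: eq_bigr => S _.
rewrite mulr_suml; apply: eq_bigr => T _; ring.
Qed.

Lemma extN0 (N : 'M[K]_n) : extN N 0 = 0.
Proof.
apply/ffunP => U; rewrite ffunE lam0 big1 // => S _; by rewrite lam0 mul0r.
Qed.

End Fin.

Definition mapl (K K' : comNzRingType) n (f : K -> K') (x : lam K n) : lam K' n :=
  [ffun S => f (x S)].

Lemma wedge_map (K K' : comNzRingType) n (f : {rmorphism K -> K'}) (x y : lam K n) :
  wedge (mapl f x) (mapl f y) = mapl f (wedge x y).
Proof.
apply/ffunP => U; rewrite [RHS]ffunE !wedge_coef rmorph_sum; apply: eq_bigr => S _.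
rewrite rmorph_sum; apply: eq_bigr => T _.
rewrite !rmorphM rmorph_nat !ffunE; congr (_ * _ * _ * _).
rewrite /sgnw; case: ifP => _; by rewrite ?rmorph0 ?rmorphXn ?rmorphN1.
Qed.

Lemma mapl0 (K K' : comNzRingType) n (f : {rmorphism K -> K'}) :
  mapl f (0 : lam K n) = 0.
Proof. apply/ffunP => S; by rewrite !ffunE rmorph0. Qed.

Lemma gen_wedge (F : fieldType) n (N : 'M[ratfun F]_n) (x x' z z' : lam F n) :
  wedge x x' = 0 -> limit_of N x z -> limit_of N x' z' -> wedge z z' = 0.
Proof.
move=> h [c [c0 [p [hp [_ ->]]]]] [c' [c0' [p' [hp' [_ ->]]]]].
set X := [ffun S => topoly F (x S)%:P].
set X' := [ffun S => topoly F (x' S)%:P].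
have hX : X = mapl (@FracField.tofrac {poly F}) (mapl (@polyC F) x).
  by apply/ffunP => S; rewrite !ffunE.
have hX' : X' = mapl (@FracField.tofrac {poly F}) (mapl (@polyC F) x').
  by apply/ffunP => S; rewrite !ffunE.
have hXX : wedge X X' = 0 by rewrite hX hX' !wedge_map h !mapl0.
have hYY : wedge (extN N X) (extN N X') = 0 by rewrite extN_wedge hXX extN0.
have hp2 : mapl (@FracField.tofrac {poly F}) (wedge p p') = 0.
  rewrite -wedge_map.
  have -> : mapl (@FracField.tofrac {poly F}) p = scl c (extN N X).
    by apply/ffunP => S; rewrite ffunE sclE -hp.
  have -> : mapl (@FracField.tofrac {poly F}) p' = scl c' (extN N X').
    by apply/ffunP => S; rewrite ffunE sclE -hp'.
  by rewrite wedgeZl wedgeZr hYY !(scl0, sclA) ; apply/ffunP => S; rewrite !ffunE mulr0.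
have pp0 : wedge p p' = 0.
  apply/ffunP => S; move/ffunP: hp2 => /(_ S); rewrite !ffunE => /eqP.
  by rewrite tofrac_eq0 => /eqP.
have -> : [ffun S => (p S).[0]] = mapl (horner_eval (0 : F)) p.
  by apply/ffunP => S; rewrite !ffunE ?horner_evalE.
have -> : [ffun S => (p' S).[0]] = mapl (horner_eval (0 : F)) p'.
  by apply/ffunP => S; rewrite !ffunE ?horner_evalE.
by rewrite wedge_map pp0 mapl0.
Qed.

Unset Implicit Arguments.
Set Strict Implicit.

Theorem lemma2p6 (F : fieldType) (n : nat) (N : 'M[ratfun F]_n)
  (L L' : lam F n -> Prop) :
  N \in unitmx ->
  is_subspace L -> is_subspace L' ->
  (forall x x', L x -> L' x' -> wedge x x' = 0) ->
  forall y y', lim_space N L y -> lim_space N L' y' -> wedge y y' = 0.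
Proof.
move=> _ _ _ hLL y y' [s [hs ->]] [s' [hs' ->]].
rewrite wedge_suml big_seq big1 // => q qs.
rewrite wedge_sumr big_seq big1 // => q' qs'.
have -> : [ffun S => q.1 * q.2 S] = scl q.1 q.2 by [].
have -> : [ffun S => q'.1 * q'.2 S] = scl q'.1 q'.2 by [].
rewrite wedgeZl wedgeZr.
have [x [Lx _ lx]] := hs q qs.
have [x' [Lx' _ lx']] := hs' q' qs'.
rewrite (gen_wedge (hLL _ _ Lx Lx') lx lx').
by apply/ffunP => S; rewrite !ffunE !mulr0.
Qed.
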